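(* Let $r\in\mathbb N$, $n\ge r$, and let $a_1,\dots,a_n\in[0,1]$ satisfy $\sum_{j=1}^na_j=1$ and $\sum_{j=1}^na_j^2\le(2^r r!)^{-1}$. Then, with $\epsilon:=(2\,r!)^{-1}$, $$\prod_{j=1}^n(1+a_jx^2)\ge\epsilon\,x^{2r}\qquad\text{for every }x>0 .$$ Consequently, for any $\lambda>0$, $q>0$, setting $\Psi(\rho):=\prod_{j=1}^n\big(\lambda^2/(\lambda^2+\rho^2a_j)\big)^q$, one has $$\int_x^{+\infty}\Psi^s(\rho)\rho^m\,d\rho\le\frac{1}{2rqs-m-1}\Big(\frac{\lambda^{2r}}{\epsilon}\Big)^{qs}x^{-2rqs+m+1}$$ for every $x>0$, $s>0$ and $m<2rqs-1$.
   Context: In the paper this is applied with $a_j=\pi_{j,\nu}^2$ (nonnegative numbers summing to one), on the event where $\nu>r$ and $\sum_j\pi_{j,\nu}^4<(2^rr!)^{-1}$. *)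

(* Defs.v *)
From Stdlib Require Import Reals Factorial.
Open Scope R_scope.

(* sum_upto f n = f 0 + ... + f (n-1)  (indices j = 1..n of the paper shifted to 0..n-1) *)
Fixpoint sum_upto (f : nat -> R) (n : nat) : R :=
  match n with O => 0 | S k => sum_upto f k + f k end.

Fixpoint prod_upto (f : nat -> R) (n : nat) : R :=
  match n with O => 1 | S k => prod_upto f k * f k end.

Definition improper_integral_eq (f : R -> R) (a l : R) : Prop :=
  (forall b, a <= b -> inhabited (Riemann_integrable f a b)) /\
  (forall eps, 0 < eps -> exists M, forall b (pr : Riemann_integrable f a b),
      a <= b -> M <= b -> Rabs (RiemannInt pr - l) < eps).

(* Main.v *)
Require Import Defs.
From Stdlib Require Import Reals Factorial Lra Lia Classical.
From Coquelicot Require Import Coquelicot.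
Open Scope R_scope.

Section S.
Variable a : nat -> R.

Fixpoint esym (k n : nat) : R :=
  match n with
  | O => match k with O => 1 | S _ => 0 end
  | S n' => esym k n' + match k with O => 0 | S k' => a n' * esym k' n' end
  end.

Definition p1 n := sum_upto a n.
Definition p2 n := sum_upto (fun j => a j ^ 2) n.

Lemma esym0 n : esym 0 n = 1.
Proof. induction n; simpl; lra. Qed.

Lemma esym1 n : esym 1 n = p1 n.
Proof. induction n; simpl; unfold p1 in *; simpl; try lra. rewrite esym0, IHn. lra. Qed.

Lemma esym_ge0 n : (forall j, (j < n)%nat -> 0 <= a j) -> forall k, 0 <= esym k n.
Proof.
  induction n; intros H k; simpl.
  - destruct k; lra.
  - assert (IH := IHn (fun j Hj => H j ltac:(lia))).
    destruct k. specialize (IH 0%nat); lra.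
    specialize (IH (S k)) as A. specialize (IH k) as B.
    assert (0 <= a n) by (apply H; lia). nra.
Qed.

Lemma p2_ge0 n : 0 <= p2 n.
Proof. unfold p2; induction n; simpl; [lra|]. pose proof (pow2_ge_0 (a n)). simpl in *; nra. Qed.

Lemma esym_up n : (forall j, (j < n)%nat -> 0 <= a j) -> forall k,
  INR (S k) * esym (S k) n <= p1 n * esym k n.
Proof.
  induction n; intros H k.
  - unfold p1; simpl esym; simpl sum_upto; destruct k; lra.
  - assert (Hn : forall j, (j < n)%nat -> 0 <= a j) by (intros; apply H; lia).
    assert (an : 0 <= a n) by (apply H; lia).
    assert (G := esym_ge0 n Hn).
    unfold p1 in *; cbn [sum_upto esym].
    destruct k.
    + rewrite !esym0. simpl. rewrite esym1. unfold p1. lra.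
    + specialize (IHn Hn) as IH. pose proof (IH (S k)) as A. pose proof (IH k) as B.
      pose proof (G k). pose proof (G (S k)).
      assert (a n * (INR (S k) * esym (S k) n) <= a n * (sum_upto a n * esym k n)) by (apply Rmult_le_compat_l; lra).
      assert (0 <= a n * (a n * esym k n)) by (apply Rmult_le_pos; [|apply Rmult_le_pos]; lra).
      rewrite !S_INR in *. nra.
Qed.

Lemma esym_low n : (forall j, (j < n)%nat -> 0 <= a j) -> forall k,
  INR (S (S k)) * esym (S (S k)) n >= p1 n * esym (S k) n - p2 n * esym k n.
Proof.
  induction n; intros H k.
  - unfold p1, p2; simpl esym; simpl sum_upto; lra.
  - assert (Hn : forall j, (j < n)%nat -> 0 <= a j) by (intros; apply H; lia).
    assert (an : 0 <= a n) by (apply H; lia).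
    assert (G := esym_ge0 n Hn).
    specialize (IHn Hn).
    unfold p1, p2 in *; cbn [sum_upto esym].
    destruct k.
    + rewrite !esym0. rewrite esym1. unfold p1.
      pose proof (IHn 0%nat) as A. rewrite esym0, esym1 in A. unfold p1 in A.
      pose proof (p2_ge0 n). unfold p2 in H0.
      rewrite !S_INR in *. simpl in *. nra.
    + pose proof (IHn (S k)) as A. pose proof (IHn k) as B.
      pose proof (G k).
      assert (a n * (INR (S (S k)) * esym (S (S k)) n) >= a n * (sum_upto a n * esym (S k) n - sum_upto (fun j => a j ^ 2) n * esym k n)).
      { apply Rle_ge, Rmult_le_compat_l; lra. }
      assert (0 <= a n ^ 3 * esym k n) by (apply Rmult_le_pos; [apply pow_le|]; lra).
      rewrite !S_INR in *. lra.
Qed.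

Lemma prod_ge n : (forall j, (j < n)%nat -> 0 <= a j) -> forall k y, 0 <= y ->
  prod_upto (fun j => 1 + a j * y) n >= esym k n * y ^ k.
Proof.
  induction n; intros H k y Hy.
  - simpl. destruct k; simpl; lra.
  - assert (Hn : forall j, (j < n)%nat -> 0 <= a j) by (intros; apply H; lia).
    assert (an : 0 <= a n) by (apply H; lia).
    assert (G := esym_ge0 n Hn).
    simpl. destruct k.
    + pose proof (IHn Hn 0%nat y Hy). simpl in *. rewrite esym0 in *.
      assert (0 <= a n * y) by nra. nra.
    + pose proof (IHn Hn (S k) y Hy) as A. pose proof (IHn Hn k y Hy) as B.
      assert (0 <= y ^ k) by (apply pow_le; lra).
      assert (0 <= a n * y) by nra.
      assert (prod_upto (fun j => 1 + a j * y) n * (a n * y) >= esym k n * y ^ k * (a n * y)) by (apply Rle_ge, Rmult_le_compat_r; lra).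
      simpl in *. lra.
Qed.

End S.

Lemma fact_S_R k : INR (fact (S k)) = INR (S k) * INR (fact k).
Proof. change (fact (S k)) with (S k * fact k)%nat. apply mult_INR. Qed.

Section T.
Variable a : nat -> R.
Variable n : nat.
Hypothesis Hpos : forall j, (j < n)%nat -> 0 <= a j.
Hypothesis Hsum : p1 a n = 1.

Definition ff k := INR (fact k) * esym a k n.

Lemma ff_dec k : ff (S k) <= ff k.
Proof.
  unfold ff. rewrite fact_S_R. pose proof (esym_up a n Hpos k) as H.
  rewrite Hsum in H. pose proof (INR_fact_lt_0 k).
  assert (INR (fact k) * (INR (S k) * esym a (S k) n) <= INR (fact k) * (1 * esym a k n)) by (apply Rmult_le_compat_l; lra).
  lra.
Qed.

Lemma ff_le1 k : ff k <= 1.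
Proof.
  induction k. unfold ff; simpl; rewrite esym0; lra.
  pose proof (ff_dec k); lra.
Qed.

Lemma ff_step k : ff (S (S k)) >= ff (S k) - p2 a n * INR (S k).
Proof.
  unfold ff. rewrite (fact_S_R (S k)), (fact_S_R k).
  pose proof (esym_low a n Hpos k) as H. rewrite Hsum in H.
  pose proof (INR_fact_lt_0 k). pose proof (ff_le1 k). unfold ff in H1.
  pose proof (p2_ge0 a n).
  assert (INR (S k) * INR (fact k) * (INR (S (S k)) * esym a (S (S k)) n) >= INR (S k) * INR (fact k) * (1 * esym a (S k) n - p2 a n * esym a k n)).
  { apply Rle_ge, Rmult_le_compat_l. pose proof (pos_INR (S k)); nra. lra. }
  assert (p2 a n * (INR (S k) * (INR (fact k) * esym a k n)) <= p2 a n * (INR (S k) * 1)).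
  { apply Rmult_le_compat_l; auto. apply Rmult_le_compat_l; auto. apply pos_INR. }
  lra.
Qed.

Definition DD k := 2 ^ k * INR (fact k).

Lemma DD_ge1 k : 1 <= DD k.
Proof.
  unfold DD. induction k. simpl; lra.
  rewrite fact_S_R. rewrite S_INR. simpl. pose proof (pos_INR k).
  pose proof (INR_fact_lt_0 k). pose proof (pow_le 2 k ltac:(lra)). nra.
Qed.

Lemma ff_low k : ff k >= 1 - p2 a n * (DD k - 1) / 2 /\ ff (S k) >= 1 - p2 a n * (DD (S k) - 1) / 2.
Proof.
  pose proof (p2_ge0 a n) as Hp.
  induction k.
  - unfold ff, DD. simpl. rewrite esym0, esym1, Hsum. lra.
  - destruct IHk as [A B]. split; auto.
    pose proof (ff_step k) as C.
    assert (E : DD (S (S k)) = 2 * INR (S (S k)) * DD (S k)).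
    { unfold DD. rewrite (fact_S_R (S k)). simpl pow. ring. }
    pose proof (DD_ge1 (S k)). rewrite !S_INR in *. pose proof (pos_INR k).
    assert (2 * (INR k + 1) <= (2 * INR k + 3) * DD (S k) ) by nra.
    assert (p2 a n * (2 * (INR k + 1)) <= p2 a n * ((2 * INR k + 3) * DD (S k))) by (apply Rmult_le_compat_l; lra).
    rewrite E. nra.
Qed.

End T.

Lemma cmul (f g : R -> R) t : continuous f t -> continuous g t -> continuous (fun y => f y * g y) t.
Proof. intros. exact (continuous_mult f g t H H0). Qed.
Lemma cplus (f g : R -> R) t : continuous f t -> continuous g t -> continuous (fun y => f y + g y) t.
Proof. intros. exact (continuous_plus f g t H H0). Qed.
Lemma cconst (c t : R) : continuous (fun _ : R => c) t.
Proof. exact (continuous_const c t). Qed.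
Lemma cid (t : R) : continuous (fun y : R => y) t.
Proof. exact (continuous_id t). Qed.
Lemma cinv (f : R -> R) t : continuous f t -> f t <> 0 -> continuous (fun y => / f y) t.
Proof. intros. exact (continuous_Rinv_comp f t H H0). Qed.
Lemma cpow (f : R -> R) t k : continuous f t -> continuous (fun y => f y ^ k) t.
Proof. intros. induction k; simpl. apply cconst. apply cmul; auto. Qed.
Lemma crpow (f : R -> R) t c : continuous f t -> 0 < f t -> continuous (fun y => Rpower (f y) c) t.
Proof.
  intros. unfold Rpower. apply continuous_exp_comp. apply cmul. apply cconst.
  apply (continuous_comp f ln). auto. apply continuous_ln. auto.
Qed.
Lemma cprod (F : nat -> R -> R) t n : (forall j, (j < n)%nat -> continuous (F j) t) ->
  continuous (fun y => prod_upto (fun j => F j y) n) t.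
Proof.
  induction n; intros H; simpl. apply cconst.
  apply cmul. apply IHn; intros; apply H; lia. apply H; lia.
Qed.

Lemma ex_cont (g : R -> R) x b : x <= b -> (forall t, x <= t -> continuous g t) -> ex_RInt g x b.
Proof.
  intros Hb Hc. apply (@ex_RInt_continuous R_CompleteNormedModule). intros z Hz. apply Hc.
  rewrite Rmin_left in Hz; lra.
Qed.

Lemma improper_bound (g : R -> R) x B :
  (forall t, x <= t -> continuous g t) -> (forall t, x <= t -> 0 <= g t) ->
  (forall b, x <= b -> RInt g x b <= B) ->
  exists l, improper_integral_eq g x l /\ l <= B.
Proof.
  intros Hc Hp HB.
  assert (mono : forall b1 b2, x <= b1 -> b1 <= b2 -> RInt g x b1 <= RInt g x b2).
  { intros b1 b2 H1 H2.
    assert (e1 : ex_RInt g x b1) by (apply ex_cont; auto).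
    assert (e2 : ex_RInt g b1 b2) by (apply ex_cont; auto; intros; apply Hc; lra).
    rewrite <- (RInt_Chasles g x b1 b2 e1 e2).
    assert (0 <= RInt g b1 b2).
    { apply RInt_ge_0; auto. intros; apply Hp; lra. }
    change (plus (RInt g x b1) (RInt g b1 b2)) with (RInt g x b1 + RInt g b1 b2). lra. }
  set (E := fun v => exists b, x <= b /\ v = RInt g x b).
  assert (Hbd : bound E). { exists B. intros v [b [Hb ->]]. auto. }
  assert (Hne : exists v, E v). { exists (RInt g x x). exists x. split; auto; lra. }
  destruct (completeness E Hbd Hne) as [l [Hub Hlub]].
  exists l. split.
  - split.
    + intros b Hb. constructor. apply ex_RInt_Reals_0. apply ex_cont; auto.
    + intros eps Heps.
      assert (exists b0, x <= b0 /\ RInt g x b0 > l - eps).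
      { apply NNPP. intro Hn. assert (l <= l - eps); [|lra].
        apply Hlub. intros v [b [Hb ->]].
        destruct (Rle_dec (RInt g x b) (l - eps)); auto.
        exfalso. apply Hn. exists b. split; auto. lra. }
      destruct H as [b0 [Hb0 Hgt]]. exists b0.
      intros b pr Hb Hbb. rewrite <- RInt_Reals.
      assert (RInt g x b <= l) by (apply Hub; exists b; auto).
      pose proof (mono b0 b Hb0 Hbb).
      apply Rabs_def1; lra.
  - apply Hlub. intros v [b [Hb ->]]. auto.
Qed.

Lemma power_int K be x b : 0 < x -> x <= b -> be + 1 < 0 ->
  RInt (fun rho => K * Rpower rho be) x b =
  K / (be + 1) * (Rpower b (be + 1) - Rpower x (be + 1)).
Proof.
  intros Hx Hb Hbe.
  apply is_RInt_unique.
  replace (K / (be + 1) * (Rpower b (be + 1) - Rpower x (be + 1))) with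
    (minus ((fun rho => K / (be + 1) * Rpower rho (be + 1)) b)
           ((fun rho => K / (be + 1) * Rpower rho (be + 1)) x))
    by (unfold minus, plus, opp; simpl; ring).
  apply (@is_RInt_derive R_CompleteNormedModule (fun rho => K / (be + 1) * Rpower rho (be + 1)) (fun rho => K * Rpower rho be)).
  - intros t Ht. rewrite Rmin_left, Rmax_right in Ht by lra.
    replace (K * Rpower t be) with (K / (be + 1) * ((be + 1) * Rpower t (be + 1 - 1))).
    apply is_derive_scal. apply is_derive_Reals. apply derivable_pt_lim_power. lra.
    replace (be + 1 - 1) with be by ring. field. lra.
  - intros t Ht. rewrite Rmin_left, Rmax_right in Ht by lra.
    apply cmul. apply cconst. apply crpow. apply cid. simpl; lra.
Qed.

Lemma prod_ext f g n : (forall j, (j < n)%nat -> f j = g j) -> prod_upto f n = prod_upto g n.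
Proof. induction n; intros H; simpl; auto. rewrite IHn, H; auto; intros; apply H; lia. Qed.

Lemma prod_pos f n : (forall j, (j < n)%nat -> 0 < f j) -> 0 < prod_upto f n.
Proof. induction n; intros H; simpl. lra. apply Rmult_lt_0_compat. apply IHn; intros; apply H; lia. apply H; lia. Qed.

Lemma prod_rpower u q n : (forall j, (j < n)%nat -> 0 < u j) ->
  prod_upto (fun j => Rpower (u j) q) n = Rpower (prod_upto u n) q.
Proof.
  induction n; intros H; simpl.
  - unfold Rpower. rewrite ln_1, Rmult_0_r, exp_0. auto.
  - rewrite IHn by (intros; apply H; lia). apply Rpower_mult_distr.
    apply prod_pos; intros; apply H; lia. apply H; lia.
Qed.

Lemma prod_inv v n : (forall j, (j < n)%nat -> v j <> 0) ->
  prod_upto (fun j => / v j) n = / prod_upto v n.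
Proof.
  induction n; intros H; simpl.
  - lra.
  - rewrite IHn by (intros; apply H; lia). rewrite Rinv_mult. auto.
Qed.

Lemma part1 (r n : nat) (a : nat -> R) :
  (forall j, (j < n)%nat -> 0 <= a j <= 1) ->
  sum_upto a n = 1 ->
  sum_upto (fun j => a j ^ 2) n <= / (2 ^ r * INR (fact r)) ->
  forall y, 0 <= y -> prod_upto (fun j => 1 + a j * y) n >= / (2 * INR (fact r)) * y ^ r.
Proof.
  intros Ha Hs Hq y Hy.
  assert (Hpos : forall j, (j < n)%nat -> 0 <= a j) by (intros j Hj; apply Ha; auto).
  pose proof (prod_ge a n Hpos r y Hy) as A.
  destruct (ff_low a n Hpos Hs r) as [B _].
  unfold ff, DD in B. change (sum_upto (fun j => a j ^ 2) n) with (p2 a n) in Hq.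
  pose proof (p2_ge0 a n). pose proof (DD_ge1 r). unfold DD in H0.
  assert (p2 a n * (2 ^ r * INR (fact r)) <= 1).
  { rewrite <- (Rinv_l (2 ^ r * INR (fact r))) by lra.
    apply Rmult_le_compat_r; lra. }
  assert (INR (fact r) * esym a r n >= 1/2) by nra.
  pose proof (INR_fact_lt_0 r).
  assert (esym a r n >= / (2 * INR (fact r))).
  { apply Rle_ge. rewrite Rinv_mult. apply (Rmult_le_reg_l (INR (fact r))); auto.
    field_simplify; lra. }
  pose proof (pow_le y r Hy). nra.
Qed.

Lemma rpow_pos b c : 0 < Rpower b c.
Proof. unfold Rpower. apply exp_pos. Qed.

Lemma pointwise (r n : nat) (a : nat -> R) lam q s m rho :
  (forall j, (j < n)%nat -> 0 <= a j <= 1) ->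
  sum_upto a n = 1 ->
  sum_upto (fun j => a j ^ 2) n <= / (2 ^ r * INR (fact r)) ->
  0 < lam -> 0 < q -> 0 < s -> 0 < rho ->
  Rpower (prod_upto (fun j => Rpower (lam ^ 2 / (lam ^ 2 + rho ^ 2 * a j)) q) n) s * Rpower rho m
  <= Rpower (lam ^ (2 * r) / / (2 * INR (fact r))) (q * s) * Rpower rho (- (2 * INR r * q * s) + m).
Proof.
  intros Ha Hs Hq Hl Hq0 Hs0 Hrho.
  set (eps := / (2 * INR (fact r))).
  assert (Heps : 0 < eps) by (unfold eps; pose proof (INR_fact_lt_0 r); apply Rinv_0_lt_compat; lra).
  set (t := rho / lam).
  assert (Ht : 0 < t) by (unfold t; apply Rdiv_lt_0_compat; auto).
  set (P := prod_upto (fun j => 1 + a j * t ^ 2) n).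
  assert (HP : P >= eps * (t ^ 2) ^ r) by (apply part1; auto; pose proof (pow2_ge_0 t); lra).
  assert (Ht2 : 0 < (t ^ 2) ^ r) by (apply pow_lt, pow_lt; auto).
  assert (HP0 : 0 < eps * (t ^ 2) ^ r) by (apply Rmult_lt_0_compat; auto).
  rewrite (prod_ext _ (fun j => Rpower (/ (1 + a j * t ^ 2)) q)).
  2:{ intros j Hj. f_equal. unfold t. pose proof (Ha j Hj).
      assert (0 < lam ^ 2 + rho ^ 2 * a j) by (pose proof (pow_lt lam 2 Hl); pose proof (pow2_ge_0 rho); nra).
      field. split; lra. }
  assert (Hpj : forall j, (j < n)%nat -> 0 < 1 + a j * t ^ 2).
  { intros j Hj. pose proof (Ha j Hj). pose proof (pow2_ge_0 t). nra. }
  rewrite prod_rpower by (intros; apply Rinv_0_lt_compat; auto).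
  rewrite prod_inv by (intros j Hj; specialize (Hpj j Hj); lra).
  fold P. rewrite Rpower_mult.
  replace (Rpower rho (- (2 * INR r * q * s) + m)) with (Rpower rho (- INR (2 * r) * (q * s)) * Rpower rho m).
  2:{ rewrite <- Rpower_plus. f_equal. rewrite mult_INR. simpl INR. ring. }
  rewrite <- Rmult_assoc.
  apply Rmult_le_compat_r. apply Rlt_le, rpow_pos.
  apply Rle_trans with (Rpower (/ (eps * (t ^ 2) ^ r)) (q * s)).
  { apply Rle_Rpower_l. nra. split. apply Rinv_0_lt_compat; lra.
    apply Rinv_le_contravar; lra. }
  assert (E : / (eps * (t ^ 2) ^ r) = (lam ^ (2 * r) / eps) * Rpower rho (- INR (2 * r))).
  { rewrite Rpower_Ropp, Rpower_pow by auto. rewrite <- pow_mult. unfold t, Rdiv.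
    rewrite Rpow_mult_distr, pow_inv. field.
    repeat split; try lra; apply pow_nonzero; lra. }
  rewrite E. rewrite <- Rpower_mult_distr.
  2:{ apply Rdiv_lt_0_compat; auto. apply pow_lt; auto. }
  2:{ apply rpow_pos. }
  rewrite (Rpower_mult rho). right. reflexivity.
Qed.

Theorem proposition2p6 (r n : nat) (a : nat -> R) :
  (r <= n)%nat ->
  (forall j, (j < n)%nat -> 0 <= a j <= 1) ->
  sum_upto a n = 1 ->
  sum_upto (fun j => a j ^ 2) n <= / (2 ^ r * INR (fact r)) ->
  let eps := / (2 * INR (fact r)) in
  (forall x, 0 < x -> prod_upto (fun j => 1 + a j * x ^ 2) n >= eps * x ^ (2 * r))
  /\
  (forall lam q, 0 < lam -> 0 < q ->
     let Psi := fun rho : R =>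
       prod_upto (fun j => Rpower (lam ^ 2 / (lam ^ 2 + rho ^ 2 * a j)) q) n in
     forall x s m, 0 < x -> 0 < s -> m < 2 * INR r * q * s - 1 ->
       exists l,
         improper_integral_eq (fun rho => Rpower (Psi rho) s * Rpower rho m) x l /\
         l <= / (2 * INR r * q * s - m - 1)
              * Rpower (lam ^ (2 * r) / eps) (q * s)
              * Rpower x (- (2 * INR r * q * s) + m + 1)).
Proof.
  intros Hr Ha Hs Hq eps. split.
  - intros x Hx. rewrite pow_mult. apply part1; auto. apply pow2_ge_0.
  - intros lam q Hl Hq0 Psi x s m Hx Hs0 Hm.
    set (K := Rpower (lam ^ (2 * r) / eps) (q * s)).
    set (be := - (2 * INR r * q * s) + m).
    assert (HK : 0 < K) by apply rpow_pos.
    assert (Hbe : be + 1 < 0) by (unfold be; lra).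
    assert (Hfac : forall j, (j < n)%nat -> forall t, 0 < lam ^ 2 + t ^ 2 * a j).
    { intros j Hj t. pose proof (Ha j Hj). pose proof (pow_lt lam 2 Hl). pose proof (pow2_ge_0 t). nra. }
    assert (Hcont : forall t, x <= t -> continuous (fun rho => Rpower (Psi rho) s * Rpower rho m) t).
    { intros t Ht. apply cmul.
      - apply crpow.
        + unfold Psi. apply cprod. intros j Hj. apply crpow.
          * unfold Rdiv. apply cmul. apply cconst. apply cinv.
            apply cplus. apply cconst. apply cmul. apply cpow, cid. apply cconst.
            specialize (Hfac j Hj t). lra.
          * apply Rdiv_lt_0_compat. apply pow_lt; auto. auto.
        + unfold Psi. apply prod_pos. intros; apply rpow_pos.
      - apply crpow. apply cid. simpl; lra. }
    destruct (improper_bound (fun rho => Rpower (Psi rho) s * Rpower rho m) x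
      (/ (2 * INR r * q * s - m - 1) * K * Rpower x (be + 1))) as [l [H1 H2]].
    + exact Hcont.
    + intros t _. apply Rlt_le, Rmult_lt_0_compat; apply rpow_pos.
    + intros b Hb.
      apply Rle_trans with (RInt (fun rho => K * Rpower rho be) x b).
      { apply RInt_le; auto.
        - apply ex_cont; auto.
        - apply ex_cont; auto. intros t Ht. apply cmul. apply cconst. apply crpow. apply cid. simpl; lra.
        - intros t Ht. unfold Psi, K, be, eps. apply pointwise; auto; lra. }
      rewrite power_int by auto.
      pose proof (rpow_pos b (be + 1)). pose proof (rpow_pos x (be + 1)).
      replace (/ (2 * INR r * q * s - m - 1)) with (- / (be + 1)) by (unfold be; field; lra).
      unfold Rdiv.
      assert (0 < K * - / (be + 1)).
      { apply Rmult_lt_0_compat; auto. rewrite <- Rinv_opp. apply Rinv_0_lt_compat; lra. }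
      nra.
    + exists l. split; auto.
Qed.
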